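(* Let $P(z)=\sum_{k=1}^K a_k(1-z)^k$, with $a_k\in\mathbb{C}$, be a polynomial mapping the unit disc $\mathbb{D}$ into $\overline{\mathbb{C}_0}=\{w:\operatorname{Re}w\ge0\}$. Then either $P\equiv0$ or $a_1>0$. *)

(* Defs.v *)
From mathcomp Require Import all_boot all_order all_algebra.
From mathcomp Require Import reals complex.
Set Implicit Arguments. Unset Strict Implicit. Unset Printing Implicit Defensive.
Import Order.TTheory GRing.Theory Num.Theory.
Local Open Scope ring_scope.
Local Open Scope complex_scope.

Definition Pfun (R : rcfType) (K : nat) (a : nat -> R[i]) (z : R[i]) : R[i] :=
  \sum_(1 <= k < K.+1) a k * (1 - z) ^+ k.

(* Main.v *)
Require Import Defs.
From mathcomp Require Import all_boot all_order all_algebra.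
From mathcomp Require Import reals complex.
From mathcomp Require Import ring lra.
From mathcomp Require Import trigo.
Import Order.TTheory GRing.Theory Num.Theory.
Local Open Scope ring_scope.
Lemma lemL (R : realFieldType) (c M d : R) (h : R -> R) : 0 < d ->
  (forall t, 0 < t -> t < d -> 0 <= c + t * h t) ->
  (forall t, 0 < t -> t < d -> `|h t| <= M) -> 0 <= c.
Proof.
move=> d0 Hp Hb; rewrite leNgt; apply/negP => c0.
have d2 : 0 < d / 2 by rewrite divr_gt0.
have d2d : d / 2 < d by lra.
have M0 : 0 <= M by apply: le_trans (Hb _ d2 d2d).
have M1 : 0 < 2 * (M + 1) by lra.
set t := Num.min (d / 2) (- c / (2 * (M + 1))).
have t0 : 0 < t by rewrite lt_min d2 divr_gt0 // oppr_gt0.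
have td : t < d by apply: le_lt_trans d2d; rewrite ge_min lexx.
have tc : t <= - c / (2 * (M + 1)) by rewrite ge_min lexx orbT.
have tc' : t * (2 * (M + 1)) <= - c by rewrite -ler_pdivlMr.
have := Hp t t0 td; have /ler_normlW hM := Hb t t0 td.
have : t * h t <= t * M by rewrite ler_pM2l.
nra.
Qed.

Lemma first_coef (R : realFieldType) (K m : nat) (c : nat -> R) (d : R) :
  0 < d -> (0 < m <= K)%N -> (forall k, (0 < k < m)%N -> c k = 0) ->
  (forall t, 0 < t -> t < d -> 0 <= \sum_(1 <= k < K.+1) c k * t ^+ k) ->
  0 <= c m.
Proof.
move=> d0 /andP[m0 mK] ck H.
apply: (@lemL R (c m) (\sum_(m.+1 <= k < K.+1) `|c k|) (Num.min d 1)
  (fun t => \sum_(m.+1 <= k < K.+1) c k * t ^+ (k - m.+1))).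
- by rewrite lt_min d0 ltr01.
- move=> t t0; rewrite lt_min => /andP[td t1].
  have := H t t0 td.
  rewrite (@big_cat_nat _ _ _ m) //=; last by rewrite ltnW.
  rewrite big_nat_cond big1 ?add0r; last first.
    by move=> k /andP[/andP[k1 km] _]; rewrite ck ?mul0r // k1.
  rewrite big_ltn ?ltnS //.
  suff -> : \sum_(m.+1 <= i < K.+1) c i * t ^+ i =
    t ^+ m * (t * \sum_(m.+1 <= k < K.+1) c k * t ^+ (k - m.+1)).
    by rewrite [c m * _]mulrC -mulrDr pmulr_rge0 // exprn_gt0.
  rewrite mulrA -exprSr mulr_sumr; apply: eq_big_nat => k /andP[mk _].
  by rewrite mulrCA -exprD subnKC.
- move=> t t0; rewrite lt_min => /andP[td t1].
  apply: le_trans (ler_norm_sum _ _ _) _; apply: ler_sum => k _.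
  rewrite normrM normrX ler_piMr // exprn_ile1 // ?normr_ge0 //.
  by rewrite ger0_norm ?ltW.
Qed.
Local Open Scope complex_scope.

Notation ReC := (@complex.Re _).
Notation ImC := (@complex.Im _).

Section C.
Variable R : realType.

Lemma ReD (x y : R[i]) : ReC (x + y) = ReC x + ReC y.
Proof. by case: x => ? ?; case: y. Qed.

Lemma Re_sum (I : Type) (r : seq I) (P : pred I) (F : I -> R[i]) :
  ReC (\sum_(i <- r | P i) F i) = \sum_(i <- r | P i) ReC (F i).
Proof. by apply: (big_morph _ ReD). Qed.

Lemma ReMr (t : R) (z : R[i]) : ReC (t%:C * z) = t * ReC z.
Proof. by case: z => p q /=; rewrite mul0r subr0. Qed.

Lemma normlt1 (z : R[i]) : ReC z ^+ 2 + ImC z ^+ 2 < 1 -> `|z| < 1.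
Proof.
case: z => p q /= h; rewrite normc_def ltcE /= eqxx /=.
by rewrite -sqrtr1 ltr_sqrt // ?ltr01.
Qed.

Definition ee (th : R) : R[i] := (cos th) +i* (sin th).

Lemma eeX th n : ee th ^+ n = ee (n%:R * th).
Proof.
elim: n => [|n IH]; first by rewrite expr0 mul0r /ee cos0 sin0.
rewrite exprS IH /ee /= -[n.+1]addn1 natrD mulrDl mul1r addrC cosD sinD.
by congr (_ +i* _); ring.
Qed.

Lemma Re_aee (a : R[i]) th : ReC (a * ee th) = ReC a * cos th - ImC a * sin th.
Proof. by case: a. Qed.


Lemma core (K : nat) (a : nat -> R[i]) m
  (hm : forall z : R[i], `|z| < 1 -> 0 <= ReC (Pfun K a z))
  (mpos : (0 < m <= K)%N) (amin : forall k, (0 < k < m)%N -> a k = 0)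
  (u : R[i]) (hu : 0 < ReC u) : 0 <= ReC (a m * u ^+ m).
Proof.
have hD : 0 < ReC u ^+ 2 + ImC u ^+ 2 + 1.
  by have := sqr_ge0 (ReC u); have := sqr_ge0 (ImC u); lra.
apply: (@first_coef R K m (fun k => ReC (a k * u ^+ k))
   (ReC u / (ReC u ^+ 2 + ImC u ^+ 2 + 1))) => //.
- by rewrite divr_gt0.
- by move=> k /amin ->; rewrite mul0r.
move=> t t0 td.
have hn : `|1 - t%:C * u| < 1.
  apply: normlt1.
  have h1 : t * (ReC u ^+ 2 + ImC u ^+ 2 + 1) < ReC u by rewrite -ltr_pdivlMr.
  clear td; move: h1 hu hD; case: u => p q /= h1 hu hD.
  nra.
move: (hm _ hn); rewrite /Pfun Re_sum (eq_bigr (fun k => ReC (a k * u ^+ k) * t ^+ k)) //.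
by move=> k _; rewrite subKr exprMn -rmorphXn mulrCA ReMr mulrC.
Qed.

End C.

Theorem lemma4p3 (R : realType) (K : nat) (a : nat -> R[i])
  (hmap : forall z : R[i], `|z| < 1 -> 0 <= Re (Pfun K a z)) :
  (forall z : R[i], Pfun K a z = 0) \/ 0 < a 1%N.
Proof.
have hm : forall z : R[i], `|z| < 1 -> 0 <= ReC (Pfun K a z).
  by move=> z /hmap; rewrite -complexRe ler0c.
case: (boolP [exists k : 'I_K.+1, (0 < k)%N && (a k != 0)]) => [hex | hno];
  last first.
  left => z; rewrite /Pfun big_nat_cond big1 // => k /andP[/andP[k1 kK] _].
  move/existsPn: hno => /(_ (Ordinal kK)) /=.
  by rewrite k1 /= negbK => /eqP ->; rewrite mul0r.
right.
have exP : exists k, (0 < k <= K)%N && (a k != 0).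
  case/existsP: hex => k /andP[k0 ak]; exists (val k).
  by rewrite k0 ak -ltnS ltn_ord.
case: (ex_minnP exP) => m /andP[mpos am] minm.
have amin : forall k, (0 < k < m)%N -> a k = 0.
  move=> k /andP[k0 km].
  have kK : (k <= K)%N by case/andP: mpos => _ /(leq_trans (ltnW km)).
  apply/eqP; apply: contraTT km => ak.
  by rewrite -leqNgt minm // k0 ak kK.
have key := @core R K a m hm mpos amin.
have [m1|m2] : m = 1%N \/ (1 < m)%N.
  by case/andP: mpos; rewrite leq_eqVlt => /orP[/eqP <-|]; [left|right].
  subst m; move: am key; case: (a 1%N) => x y am key.
  have hx : 0 <= x by have := key 1 ltr01; rewrite expr1 /=; lra.
  have hy1 : 0 <= - y.
    apply: (@lemL R (- y) `|x| 1 (fun _ => x)) => //.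
    by move=> t t0 _; have := key (t +i* 1) t0; rewrite expr1 /=; lra.
  have hy2 : 0 <= y.
    apply: (@lemL R y `|x| 1 (fun _ => x)) => //.
    by move=> t t0 _; have := key (t +i* (-1)) t0; rewrite expr1 /=; lra.
  have y0 : y = 0 by lra.
  subst y; rewrite ltcE /= eqxx /= lt_neqAle hx andbT.
  by apply: contraNneq am => <-.
exfalso; move: am key; case: (a m) => x y am key.
have hx : 0 <= x by have := key 1 ltr01; rewrite expr1n mulr1.
have hpi : 0 < pi :> R := pi_gt0 R.
have mR : 2 <= m%:R :> R by rewrite ler_nat.
have mR0 : m%:R != 0 :> R by rewrite pnatr_eq0 -lt0n ltnW.
have mpos' : 0 < m%:R :> R by lra.
have hb : 0 < (pi : R) / 2 / m%:R < pi / 2.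
  rewrite divr_gt0 ?divr_gt0 //= ltr_pdivrMr //.
  have : 0 < pi / 2 :> R by rewrite divr_gt0.
  nra.
have hy1 : 0 <= - y.
  have c1 : 0 < ReC (@ee R (pi / 2 / m%:R)) by rewrite /= cos_gt0_pihalf //; lra.
  have := key _ c1; rewrite eeX [_%:R * _]mulrC divfK // Re_aee cos_pihalf sin_pihalf.
  rewrite /=; lra.
have hy2 : 0 <= y.
  have c1 : 0 < ReC (@ee R (- (pi / 2 / m%:R))) by rewrite /= cos_gt0_pihalf //; lra.
  have := key _ c1; rewrite eeX mulrN [_%:R * _]mulrC divfK // Re_aee cosN sinN.
  rewrite cos_pihalf sin_pihalf /=; lra.
have y0 : y = 0 by lra.
subst y.
have hx2 : x <= 0.
  have [m2'|m3] : m = 2%N \/ (2 < m)%N.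
    by move: m2; rewrite leq_eqVlt => /orP[/eqP <-|]; [left|right].
    subst m; have := key (1 +i* 2) ltr01.
    by rewrite expr2 /=; lra.
  have hb3 : 0 < (pi : R) / m%:R < pi / 2.
    have mR3 : 3 <= m%:R :> R by rewrite ler_nat.
    rewrite divr_gt0 //= ltr_pdivrMr //; nra.
  have c1 : 0 < ReC (@ee R (pi / m%:R)) by rewrite /= cos_gt0_pihalf //; lra.
  have := key _ c1; rewrite eeX [_%:R * _]mulrC divfK // Re_aee cospi sinpi.
  rewrite /=; lra.
have x0 : x = 0 by lra.
by subst x; rewrite eqxx in am.
Qed.
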